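(* Let $E$ be a free $A_n(K)$-module with basis $e_1,\dots,e_m$, let $f\in E$, and let $G=\{g_1,\dots,g_r\}\subseteq E$ be an $(x,\partial)$-Gröbner basis in $E$ (i.e. an $(x,\partial)$-Gröbner basis of the submodule $\sum_{i=1}^r A_n(K)g_i$). Then there exist an element $g\in E$ and elements $Q_1,\dots,Q_r\in A_n(K)$ such that $f-g=\sum_{i=1}^r Q_ig_i$ and $g$ is $(x,\partial)$-reduced with respect to $G$.
   Context: $K$ is a field of characteristic zero and $A_n(K)$ is the Weyl algebra: the $K$-algebra generated by $x_1,\dots,x_n,\partial_1,\dots,\partial_n$ in which all pairs of generators commute except that $\partial_ix_i=x_i\partial_i+1$ ($i=1,\dots,n$). $\Theta$ denotes the set of monomials $x^\alpha\partial^\beta=x_1^{\alpha_1}\cdots x_n^{\alpha_n}\partial_1^{\beta_1}\cdots\partial_n^{\beta_n}$ ($\alpha,\beta\in\mathbf N^n$); it is a $K$-basis of $A_n(K)$. For $\theta=x^\alpha\partial^\beta$ put $ord_x\theta=|\alpha|=\sum\alpha_i$ and $ord_\partial\theta=|\beta|$. For $\theta=x^\alpha\partial^\beta$, $\theta'=x^\gamma\partial^\delta$ we say $\theta$ divides $\theta'$ ($\theta\mid\theta'$) if $\alpha_i\le\gamma_i,\beta_i\le\delta_i$ for all $i$, and then $\theta'/\theta:=x^{\gamma-\alpha}\partial^{\delta-\beta}\in\Theta$. The set $\Theta e=\{\theta e_i\}$ of terms is a $K$-basis of $E$; every nonzero $f\in E$ is uniquely a $K$-linear combination of distinct terms with nonzero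 coefficients, and these terms are said to appear in $f$. For a term $\theta e_i$, $ord_x(\theta e_i)=ord_x\theta$, $ord_\partial(\theta e_i)=ord_\partial\theta$. For $\theta=x^\alpha\partial^\beta\in\Theta$ and a term $w=x^\gamma\partial^\delta e_i$, the notation $\theta w$ denotes the term $x^{\alpha+\gamma}\partial^{\beta+\delta}e_i$ (exponent addition), whereas $\theta f$ for $f\in E$ denotes the module action. A term $w=\theta'e_i$ is a multiple of (is divisible by) $v=\theta e_j$, written $v\mid w$, if $i=j$ and $\theta\mid\theta'$; then $w/v:=\theta'/\theta$. Orders on $\Theta$: $x^\alpha\partial^\beta<_x x^\gamma\partial^\delta$ iff $(|\alpha|,|\beta|,\alpha_1,\dots,\alpha_n,\beta_1,\dots,\beta_n)$ is lexicographically smaller than $(|\gamma|,|\delta|,\gamma_1,\dots,\gamma_n,\delta_1,\dots,\delta_n)$; $x^\alpha\partial^\beta<_\partial x^\gamma\partial^\delta$ iff $(|\beta|,|\alpha|,\beta_1,\dots,\beta_n,\alpha_1,\dots,\alpha_n)$ is lexicographically smaller than $(|\delta|,|\gamma|,\delta_1,\dots,\delta_n,\gamma_1,\dots,\gamma_n)$. On terms, $\theta e_i<_x\theta'e_j$ iff $\theta<_x\theta'$, or $\theta=\theta'$ and $i<j$; similarly for $<_\partial$. For nonzero $f\in E$, the $x$-leader $u_f$ is the $<_x$-greatest term appearing in $f$ and the $\partial$-leader $v_f$ is the $<_\partial$-greatest term appearing in $f$; $lc_x(f)$ is the coefficient of $u_f$ in $f$. For $g\ne0$, an element $f\in E$ is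 $(x,\partial)$-reduced with respect to $g$ if $f$ contains no term of the form $\theta u_g$ ($\theta\in\Theta$) with $ord_\partial(\theta v_g)\le ord_\partial v_f$ (the zero element is reduced); $f$ is $(x,\partial)$-reduced with respect to a set $G$ if it is so with respect to every element of $G$. For nonzero $f$, let $d(f)=ord_\partial v_f-ord_\partial u_f$. A finite set $G=\{g_1,\dots,g_r\}$ of nonzero elements of a submodule $N\subseteq E$ is an $(x,\partial)$-Gröbner basis of $N$ if for every nonzero $f\in N$ there is $i$ with $u_{g_i}\mid u_f$ and $d(g_i)\le d(f)$. *)

(* Defs.v *)
From HB Require Import structures.
From mathcomp Require Import all_boot all_order all_algebra.
From mathcomp Require Import finmap.
From mathcomp.multinomials Require Import monalg.

Set Implicit Arguments.
Unset Strict Implicit.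
Unset Printing Implicit Defensive.

Import Order.TTheory GRing.Theory Num.Theory.
Local Open Scope ring_scope.

(* Monomials x^alpha d^beta of the Weyl algebra A_n(K): pairs (alpha, beta). *)
Definition Mon (n : nat) := (n.-tuple nat * n.-tuple nat)%type.
(* Terms theta e_i of the free module E with basis e_1..e_m (index i : 'I_m). *)
Definition Term (n m : nat) := (Mon n * 'I_m)%type.

(* A_n(K) as a K-vector space with basis Theta; E = A_n(K)^m with basis Theta e. *)
Definition Weyl (K : fieldType) (n : nat) := {malg K[Mon n]}.
Definition FreeMod (K : fieldType) (n m : nat) := {malg K[Term n m]}.

Section Weyl.
Variables (K : fieldType) (n m : nat).

Definition tsum (t : n.-tuple nat) : nat := (\sum_(i < n) tnth t i)%N.
Definition ordx (th : Mon n) : nat := tsum th.1.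
Definition ordd (th : Mon n) : nat := tsum th.2.

Definition mdiv (th th' : Mon n) : bool :=
  [forall i, tnth th.1 i <= tnth th'.1 i]%N && [forall i, tnth th.2 i <= tnth th'.2 i]%N.
Definition tdiv (v w : Term n m) : bool := (v.2 == w.2) && mdiv v.1 w.1.
Definition mquot (th th' : Mon n) : Mon n :=
  ([tuple (tnth th'.1 i - tnth th.1 i)%N | i < n],
   [tuple (tnth th'.2 i - tnth th.2 i)%N | i < n]).

Fixpoint lexle (s t : seq nat) : bool :=
  match s, t with
  | [::], _ => true
  | _ :: _, [::] => false
  | a :: s', b :: t' => (a < b)%N || ((a == b) && lexle s' t')
  end.

Definition keyx (th : Mon n) : seq nat :=
  [:: ordx th; ordd th] ++ (th.1 : seq nat) ++ (th.2 : seq nat).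
Definition keyd (th : Mon n) : seq nat :=
  [:: ordd th; ordx th] ++ (th.2 : seq nat) ++ (th.1 : seq nat).

Definition termle_x (w u : Term n m) : bool :=
  lexle (keyx w.1 ++ [:: nat_of_ord w.2]) (keyx u.1 ++ [:: nat_of_ord u.2]).
Definition termle_d (w u : Term n m) : bool :=
  lexle (keyd w.1 ++ [:: nat_of_ord w.2]) (keyd u.1 ++ [:: nat_of_ord u.2]).

Definition is_xleader (f : FreeMod K n m) (u : Term n m) : Prop :=
  u \in msupp f /\ forall w, w \in msupp f -> termle_x w u.
Definition is_dleader (f : FreeMod K n m) (v : Term n m) : Prop :=
  v \in msupp f /\ forall w, w \in msupp f -> termle_d w v.

Definition tincr (t : n.-tuple nat) (i : 'I_n) : n.-tuple nat :=
  [tuple (if j == i then (tnth t j).+1 else tnth t j) | j < n].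
Definition tdecr (t : n.-tuple nat) (i : 'I_n) : n.-tuple nat :=
  [tuple (if j == i then (tnth t j).-1 else tnth t j) | j < n].

Definition linext (F : Term n m -> FreeMod K n m) (f : FreeMod K n m) : FreeMod K n m :=
  \sum_(w <- msupp f) f@_w *: F w.

Definition xop (i : 'I_n) : FreeMod K n m -> FreeMod K n m :=
  linext (fun w => << ((tincr w.1.1 i, w.1.2), w.2) >>).
(* d_i * (x^g d^d e_j) = x^g d^(d+eps_i) e_j + g_i x^(g-eps_i) d^d e_j *)
Definition dop (i : 'I_n) : FreeMod K n m -> FreeMod K n m :=
  linext (fun w => << ((w.1.1, tincr w.1.2 i), w.2) >>
                   + (tnth w.1.1 i)%:R *: << ((tdecr w.1.1 i, w.1.2), w.2) >>).

(* action of a monomial x^alpha d^beta: first d^beta, then x^alpha *)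
Definition act_mon (th : Mon n) (f : FreeMod K n m) : FreeMod K n m :=
  foldr (fun i g => iter (tnth th.1 i) (xop i) g)
        (foldr (fun i g => iter (tnth th.2 i) (dop i) g) f (enum 'I_n))
        (enum 'I_n).

Definition act (Q : Weyl K n) (f : FreeMod K n m) : FreeMod K n m :=
  \sum_(th <- msupp Q) Q@_th *: act_mon th f.

Definition in_submod (r : nat) (g : 'I_r -> FreeMod K n m) (f : FreeMod K n m) : Prop :=
  exists Q : 'I_r -> Weyl K n, f = \sum_(i < r) act (Q i) (g i).

Definition dval (u v : Term n m) : nat := (ordd v.1 - ordd u.1)%N.

Definition is_xd_groebner (r : nat) (g : 'I_r -> FreeMod K n m) : Prop :=
  (forall i, g i != 0) /\
  forall f, f != 0 -> in_submod g f ->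
  forall uf vf, is_xleader f uf -> is_dleader f vf ->
  exists i : 'I_r, exists ug vg,
    [/\ is_xleader (g i) ug, is_dleader (g i) vg, tdiv ug uf
      & (dval ug vg <= dval uf vf)%N].

(* f is (x,d)-reduced w.r.t. g: f contains no term theta u_g with
   ord_d (theta v_g) <= ord_d v_f (vacuous for f = 0) *)
Definition xd_reduced (g f : FreeMod K n m) : Prop :=
  forall ug vg vf, is_xleader g ug -> is_dleader g vg -> is_dleader f vf ->
  forall w, w \in msupp f ->
    ~~ (tdiv ug w && (ordd (mquot ug.1 w.1) + ordd vg.1 <= ordd vf.1)%N).

Definition xd_reduced_set (r : nat) (g : 'I_r -> FreeMod K n m) (f : FreeMod K n m) : Prop :=
  forall i, xd_reduced (g i) f.

End Weyl.

(* Main.v *)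
Require Import Defs.
From HB Require Import structures.
From mathcomp Require Import all_boot all_order all_algebra.
From mathcomp Require Import finmap.
From mathcomp.multinomials Require Import monalg.
From Stdlib Require Import Classical.
From mathcomp Require Import zify.
Set Implicit Arguments.
Unset Strict Implicit.
Unset Printing Implicit Defensive.
Import Order.TTheory GRing.Theory Num.Theory.
Local Open Scope ring_scope.

Lemma lexle_refl s : lexle s s.
Proof. by elim: s => //= a s ->; rewrite eqxx orbT. Qed.

Lemma lexle_total s t : lexle s t || lexle t s.
Proof.
elim: s t => [|a s IH] [|b t] //=.
by case: (ltngtP a b) => //= ->; rewrite ?eqxx /=.
Qed.

Lemma lexle_trans s t u : lexle s t -> lexle t u -> lexle s u.
Proof.
elim: s t u => [|a s IH] [|b t] [|c u] //=.
case/orP => [ab|/andP[/eqP <- st]]; case/orP => [bc|/andP[/eqP <- tu]].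
- by rewrite (ltn_trans ab bc).
- by rewrite ab.
- by rewrite bc.
- by rewrite eqxx (IH _ _ st tu) orbT.
Qed.

Definition addseq (a s : seq nat) : seq nat := [seq (x.1 + x.2)%N | x <- zip a s].

Lemma lexle_addseq a s t : size s = size a -> size t = size a ->
  lexle (addseq a s) (addseq a t) = lexle s t.
Proof.
elim: a s t => [|x a IH] [|y s] [|z t] //= [hs] [ht].
by rewrite ltn_add2l eqn_add2l IH.
Qed.

Lemma addseq_cat a1 a2 s1 s2 : size s1 = size a1 ->
  addseq (a1 ++ a2) (s1 ++ s2) = addseq a1 s1 ++ addseq a2 s2.
Proof. by move=> h; rewrite /addseq zip_cat // map_cat. Qed.

Definition lexR k (a b : seq nat) := [/\ size a = k, size b = k, lexle a b & a != b].

Lemma lexR_wf k : forall s, Acc (lexR k) s.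
Proof.
elim: k => [|k IHk] s.
  constructor=> a [ha hb _]; move/eqP: hb; rewrite size_eq0 => /eqP ->.
  by move/eqP: ha; rewrite size_eq0 => /eqP ->; rewrite eqxx.
case: s => [|x s'].
  by constructor=> a [_ hb]; discriminate.
elim/ltn_ind: x s' => x IHx s'.
move: (IHk s'); elim=> {}s' _ IHs'.
constructor=> [[|y a']] [ha hb]; first by discriminate.
move: ha hb => /= [ha] [hb] /orP[yx | /andP[/eqP eyx ha']] neq.
  by apply: IHx.
subst y; apply: IHs'; split=> //.
by apply: contra neq => /eqP ->.
Qed.


Section S.
Variables (K : fieldType) (n m : nat).
Local Notation T := (Term n m).
Local Notation FM := (FreeMod K n m).

Lemma linextEw F (f : FM) (d : {fset T}) : (msupp f `<=` d)%fset ->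
  linext F f = \sum_(w <- d) f@_w *: F w.
Proof.
move=> le; rewrite /linext (big_fset_incl _ le) //= => x xd /mcoeff_outdom ->.
by rewrite scale0r.
Qed.

Definition islin (phi : FM -> FM) :=
  (forall x y, phi (x + y) = phi x + phi y) /\ (forall c x, phi (c *: x) = c *: phi x).

Lemma islin_linext F : islin (linext F).
Proof.
split.
  move=> x y; rewrite (@linextEw F (x + y) (msupp x `|` msupp y)%fset) ?msuppD_le //.
  rewrite (@linextEw F x (msupp x `|` msupp y)%fset) ?fsubsetUl //.
  rewrite (@linextEw F y (msupp x `|` msupp y)%fset) ?fsubsetUr //.
  by rewrite -big_split /=; apply: eq_bigr => w _; rewrite mcoeffD scalerDl.
move=> c x; rewrite (@linextEw F (c *: x) (msupp x)) ?msuppZ_le //.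
rewrite /linext scaler_sumr; apply: eq_bigr => w _.
by rewrite mcoeffZ scalerA.
Qed.

Lemma islin0 phi : islin phi -> phi 0 = 0.
Proof. move=> hl; have h := hl.2 (0:K) (0:FM). by rewrite scale0r in h; rewrite h scale0r. Qed.

Lemma islinB phi x y : islin phi -> phi (x - y) = phi x - phi y.
Proof.
move=> [hD hZ]; rewrite hD -scaleN1r hZ scaleN1r //.
Qed.

Lemma islin_sum phi (I : Type) (s : seq I) (F : I -> FM) : islin phi ->
  phi (\sum_(i <- s) F i) = \sum_(i <- s) phi (F i).
Proof.
move=> hl; elim: s => [|a s IH]; first by rewrite !big_nil islin0.
by rewrite !big_cons hl.1 IH.
Qed.

Lemma islin_comp phi psi : islin phi -> islin psi -> islin (fun x => phi (psi x)).
Proof.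
move=> [h1 h2] [h3 h4]; split; first by move=> x y; rewrite h3 h1.
by move=> c x; rewrite h4 h2.
Qed.

Lemma islin_id : islin id.
Proof. by split. Qed.

Lemma islin_iter k phi : islin phi -> islin (iter k phi).
Proof.
move=> hl; elim: k => [|k IH]; first exact: islin_id.
exact: (islin_comp hl IH).
Qed.

Lemma islin_foldr (I : Type) (s : seq I) (P : I -> FM -> FM) :
  (forall i, islin (P i)) -> islin (fun x => foldr P x s).
Proof.
move=> hP; elim: s => [|a s IH]; first exact: islin_id.
exact: (islin_comp (hP a) IH).
Qed.

Lemma xop_lin i : islin (@xop K n m i). Proof. exact: islin_linext. Qed.
Lemma dop_lin i : islin (@dop K n m i). Proof. exact: islin_linext. Qed.

Lemma act_mon_lin th : islin (@act_mon K n m th).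
Proof.
rewrite /act_mon.
apply: (islin_comp (phi := fun x => foldr (fun i g => iter (tnth th.1 i) (@xop K n m i) g) x (enum 'I_n))).
  by apply: islin_foldr => i; apply: islin_iter; apply: xop_lin.
by apply: islin_foldr => i; apply: islin_iter; apply: dop_lin.
Qed.

Lemma malgUZ (c : K) (w : T) : << c *g w >> = c *: (<< w >> : FM).
Proof.
apply/malgP => k.
rewrite mcoeffZ.
have h1 := (@mcoeffU _ K w c k). 
have h2 : (<<w>> : FM)@_k = (w == k)%:R := (@mcoeffU _ K w 1 k).
apply: (etrans h1).
rewrite h2.
by case: (w == k); rewrite ?mulr1 ?mulr0.
Qed.

Lemma islin_expand phi (f : FM) : islin phi ->
  phi f = \sum_(w <- msupp f) f@_w *: phi << w >>.
Proof.
move=> hl; rewrite {1}(monalgE f) islin_sum //.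
by apply: eq_bigr => w _; rewrite malgUZ hl.2.
Qed.

Lemma mcoeffU1' (w k : T) : (<<w>> : FM)@_k = (w == k)%:R.
Proof. exact: (@mcoeffU _ K w 1 k). Qed.

Lemma msuppU1' (w : T) : msupp (<<w>> : FM) = [fset w]%fset.
Proof. have := (@msuppU _ K w 1). by rewrite oner_eq0. Qed.

Lemma linextU (F : T -> FM) (w : T) : linext F << w >> = F w.
Proof.
rewrite /linext msuppU1' big_seq_fset1 mcoeffU1' eqxx.
by rewrite scale1r.
Qed.

End S.


Local Close Scope ring_scope.
Section T.
Variables (n m : nat).
Local Notation T := (Term n m).

Definition mx (w : T) i : T := ((tincr w.1.1 i, w.1.2), w.2).
Definition md (w : T) i : T := ((w.1.1, tincr w.1.2 i), w.2).
Definition tadd (a b : n.-tuple nat) : n.-tuple nat := [tuple (tnth a j + tnth b j)%N | j < n].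
Definition mshift (th : Mon n) (w : T) : T := ((tadd th.1 w.1.1, tadd th.2 w.1.2), w.2).
Definition key (w : T) : seq nat := keyx w.1 ++ [:: nat_of_ord w.2].

Lemma tsum_incr (t : n.-tuple nat) (i : 'I_n) : tsum (tincr t i) = (tsum t).+1.
Proof.
rewrite /tsum (bigD1 i) //= [in RHS](bigD1 i) //= tnth_mktuple eqxx addSn; congr (_.+1 + _)%N.
by apply: eq_bigr => j /negbTE ji; rewrite tnth_mktuple ji.
Qed.

Lemma tsum_decr_le (t : n.-tuple nat) (i : 'I_n) : (tsum (tdecr t i) <= tsum t)%N.
Proof.
rewrite /tsum; apply: leq_sum => j _; rewrite tnth_mktuple.
by case: (j == i) => //; apply: leq_pred.
Qed.

Lemma tsum_decr_lt (t : n.-tuple nat) (i : 'I_n) : (0 < tnth t i)%N -> (tsum (tdecr t i) < tsum t)%N.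
Proof.
move=> h; rewrite /tsum (bigD1 i) //= [in X in (_ < X)%N](bigD1 i) //= tnth_mktuple eqxx.
rewrite -addSn; apply: leq_add; first by rewrite prednK.
apply: leq_sum => j /negbTE ji; rewrite tnth_mktuple ji //.
Qed.

Lemma tsum_add (a b : n.-tuple nat) : tsum (tadd a b) = (tsum a + tsum b)%N.
Proof. by rewrite /tsum -big_split; apply: eq_bigr => j _; rewrite tnth_mktuple. Qed.

Lemma val_tadd (a b : n.-tuple nat) : val (tadd a b) = addseq a b.
Proof.
apply: (@eq_from_nth _ 0%N).
  by rewrite /addseq size_map size_zip !size_tuple minnn.
move=> i; rewrite size_tuple => hi.
rewrite /addseq (nth_map (0,0)%N); last by rewrite size_zip !size_tuple minnn.
rewrite nth_zip ?size_tuple //=.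
have -> : nth 0%N (tadd a b) i = tnth (tadd a b) (Ordinal hi) by rewrite (tnth_nth 0%N).
by rewrite tnth_mktuple !(tnth_nth 0%N).
Qed.

Lemma tnth_iter_incr k (i : 'I_n) (t : n.-tuple nat) (j : 'I_n) :
  tnth (iter k (fun t => tincr t i) t) j = (tnth t j + (if j == i then k else 0))%N.
Proof.
elim: k => [|k IH] /=; first by case: (j == i); rewrite addn0.
rewrite tnth_mktuple IH; case: (j == i); by rewrite ?addnS.
Qed.

Lemma tnth_foldr_incr (s : seq 'I_n) (k : 'I_n -> nat) (t : n.-tuple nat) (j : 'I_n) :
  tnth (foldr (fun i t => iter (k i) (fun t => tincr t i) t) t s) j =
  (tnth t j + \sum_(i <- s) (if j == i then k i else 0))%N.
Proof.
elim: s => [|a s IH] /=; first by rewrite big_nil addn0.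
rewrite tnth_iter_incr IH big_cons; lia.
Qed.

Lemma sum_enum_pick (k : 'I_n -> nat) (j : 'I_n) :
  (\sum_(i <- enum 'I_n) (if j == i then k i else 0))%N = k j.
Proof.
rewrite (bigD1_seq j) ?mem_enum ?enum_uniq //= eqxx big1_seq ?addn0 // => i /andP[ij _].
by rewrite eq_sym (negbTE ij).
Qed.

Lemma iter_mx k (w : T) (i : 'I_n) : iter k (fun w => mx w i) w = ((iter k (fun t => tincr t i) w.1.1, w.1.2), w.2).
Proof. by elim: k => [|k IH] /=; [case: w => [[]] | rewrite IH]. Qed.

Lemma iter_md k (w : T) (i : 'I_n) : iter k (fun w => md w i) w = ((w.1.1, iter k (fun t => tincr t i) w.1.2), w.2).
Proof. by elim: k => [|k IH] /=; [case: w => [[]] | rewrite IH]. Qed.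

Lemma foldr_mx (s : seq 'I_n) (k : 'I_n -> nat) (w : T) :
  foldr (fun i w => iter (k i) (fun w => mx w i) w) w s =
  ((foldr (fun i t => iter (k i) (fun t => tincr t i) t) w.1.1 s, w.1.2), w.2).
Proof. by elim: s => [|a s IH] /=; [case: w => [[]] | rewrite iter_mx IH]. Qed.

Lemma foldr_md (s : seq 'I_n) (k : 'I_n -> nat) (w : T) :
  foldr (fun i w => iter (k i) (fun w => md w i) w) w s =
  ((w.1.1, foldr (fun i t => iter (k i) (fun t => tincr t i) t) w.1.2 s), w.2).
Proof. by elim: s => [|a s IH] /=; [case: w => [[]] | rewrite iter_md IH]. Qed.

Lemma foldr_incr_enum (k : 'I_n -> nat) (t : n.-tuple nat) :
  foldr (fun i t => iter (k i) (fun t => tincr t i) t) t (enum 'I_n) =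
  [tuple (k j + tnth t j)%N | j < n].
Proof.
apply: eq_from_tnth => j; rewrite tnth_foldr_incr sum_enum_pick tnth_mktuple addnC //.
Qed.

Lemma ordx_mshift (th : Mon n) (w : T) : ordx (mshift th w).1 = (ordx th + ordx w.1)%N.
Proof. exact: tsum_add. Qed.
Lemma ordd_mshift (th : Mon n) (w : T) : ordd (mshift th w).1 = (ordd th + ordd w.1)%N.
Proof. exact: tsum_add. Qed.

Lemma size_keyx (th : Mon n) : size (keyx th) = (n + n).+2.
Proof. by rewrite /keyx /= size_cat !size_tuple. Qed.

Lemma key_mshift (th : Mon n) (w : T) : key (mshift th w) = addseq (keyx th ++ [:: 0%N]) (key w).
Proof.
rewrite /key /keyx ordx_mshift ordd_mshift.
have -> : ((mshift th w).1.1 : seq nat) = addseq th.1 w.1.1 by rewrite -val_tadd.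
have -> : ((mshift th w).1.2 : seq nat) = addseq th.2 w.1.2 by rewrite -val_tadd.
rewrite -!catA.
rewrite [addseq (_ :: _) _]/addseq /= -/(addseq _ _).
rewrite addseq_cat ?size_tuple // addseq_cat ?size_tuple //.
Qed.

Lemma key_inj (a b : T) : key a = key b -> a = b.
Proof.
case: a => [[a1 a2] ai]; case: b => [[b1 b2] bi].
rewrite /key /keyx /= => [[_ _]] /eqP.
rewrite -!catA eqseq_cat ?size_tuple // => /andP[/eqP e1].
rewrite eqseq_cat ?size_tuple // => /andP[/eqP e2 /eqP [ei]].
by rewrite (val_inj e1) (val_inj e2) (ord_inj ei).
Qed.

Lemma mshift_inj (th : Mon n) : injective (mshift th).
Proof.
move=> [[a1 a2] ai] [[b1 b2] bi] E.
have e1 : tadd th.1 a1 = tadd th.1 b1 := congr1 (fun w => w.1.1) E.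
have e2 : tadd th.2 a2 = tadd th.2 b2 := congr1 (fun w => w.1.2) E.
have -> : ai = bi := congr1 (fun w => w.2) E.
have h1 : a1 = b1.
  apply: eq_from_tnth => j; have := f_equal (fun t => tnth t j) e1.
  by rewrite /= !tnth_mktuple => /addnI.
have h2 : a2 = b2.
  apply: eq_from_tnth => j; have := f_equal (fun t => tnth t j) e2.
  by rewrite /= !tnth_mktuple => /addnI.
by rewrite h1 h2.
Qed.

Lemma termle_x_key (a b : T) : termle_x a b = lexle (key a) (key b).
Proof. by []. Qed.

Lemma termle_x_mshift (th : Mon n) (a b : T) : termle_x a b -> termle_x (mshift th a) (mshift th b).
Proof.
rewrite !termle_x_key !key_mshift lexle_addseq //.
  by rewrite /key !size_cat !size_tuple.
by rewrite /key !size_cat !size_tuple.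
Qed.

Lemma termle_x_ordx (a b : T) : termle_x a b -> (ordx a.1 <= ordx b.1)%N.
Proof. by rewrite /termle_x /keyx /= => /orP[/ltnW|/andP[/eqP -> _]]. Qed.

Lemma termle_d_ordd (a b : T) : termle_d a b -> (ordd a.1 <= ordd b.1)%N.
Proof. by rewrite /termle_d /keyd /= => /orP[/ltnW|/andP[/eqP -> _]]. Qed.

Lemma ordx_lt_termle (a b : T) : (ordx a.1 < ordx b.1)%N -> termle_x a b && (a != b).
Proof.
move=> h; rewrite /termle_x /keyx /= h /=; apply/eqP => e.
by rewrite e ltnn in h.
Qed.

Lemma mshift_mquot (u w : T) : tdiv u w -> mshift (mquot u.1 w.1) u = w.
Proof.
case: u => [[u1 u2] ui]; case: w => [[w1 w2] wi].
rewrite /tdiv /mdiv /= => /andP[/eqP -> /andP[/forallP h1 /forallP h2]].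
rewrite /mshift /mquot /=; congr (_, _, _).
  by apply: eq_from_tnth => j; rewrite !tnth_mktuple subnK.
by apply: eq_from_tnth => j; rewrite !tnth_mktuple subnK.
Qed.

End T.

Local Open Scope ring_scope.


Section L.
Variables (K : fieldType) (n m : nat).
Local Notation T := (Term n m).
Local Notation FM := (FreeMod K n m).

Definition Low (R : FM) (X D : nat) :=
  forall t, t \in msupp R -> (ordx t.1 < X)%N /\ (ordd t.1 <= D)%N.

Lemma msupp0' : msupp (0 : FM) = fset0.
Proof. exact: msupp0. Qed.

Lemma Low0 X D : Low 0 X D.
Proof. by move=> t; rewrite msupp0'. Qed.

Lemma LowD (a b : FM) X D : Low a X D -> Low b X D -> Low (a + b) X D.
Proof.
move=> ha hb t /(fsubsetP (msuppD_le a b)); rewrite in_fsetU => /orP[/ha|/hb] //.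
Qed.

Lemma LowZ (c : K) (a : FM) X D : Low a X D -> Low (c *: a) X D.
Proof. by move=> ha t /(fsubsetP (msuppZ_le c a)) /ha. Qed.

Lemma LowW (a : FM) X D X' D' : (X <= X')%N -> (D <= D')%N -> Low a X D -> Low a X' D'.
Proof.
move=> hX hD ha t /ha [h1 h2]; split; first exact: leq_trans h1 hX.
exact: leq_trans h2 hD.
Qed.

Lemma LowU (w : T) X D : (ordx w.1 < X)%N -> (ordd w.1 <= D)%N -> Low <<w>> X D.
Proof. by move=> h1 h2 t; rewrite msuppU1' in_fset1 => /eqP ->. Qed.

Lemma Low_sumZ (s : seq T) (c : T -> K) (F : T -> FM) X D :
  (forall w, w \in s -> Low (F w) X D) -> Low (\sum_(w <- s) c w *: F w) X D.
Proof.
elim: s => [|a s IH] h; first by rewrite big_nil; apply: Low0.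
rewrite big_cons; apply: LowD; first by apply: LowZ; apply: h; rewrite inE eqxx.
by apply: IH => w ws; apply: h; rewrite inE ws orbT.
Qed.

Lemma Low_linext F (R : FM) X D :
  (forall w, w \in msupp R -> Low (F w) X D) -> Low (linext F R) X D.
Proof. exact: Low_sumZ. Qed.

Lemma xop_low i (R : FM) X D : Low R X D -> Low (xop i R) X.+1 D.
Proof.
move=> hR; apply: Low_linext => w /hR [h1 h2]; apply: LowU => //=.
by rewrite /ordx tsum_incr.
Qed.

Lemma dop_low i (R : FM) X D : Low R X D -> Low (dop i R) X D.+1.
Proof.
move=> hR; apply: Low_linext => w /hR [h1 h2]; apply: LowD.
  apply: LowU => //=; by rewrite /ordd tsum_incr.
apply: LowZ; apply: LowU => //=; last exact: leqW.
exact: leq_ltn_trans (tsum_decr_le _ _) h1.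
Qed.

Definition Inv (F : FM) (w0 : T) :=
  exists R, F = <<w0>> + R /\ Low R (ordx w0.1) (ordd w0.1).

Lemma xop_inv i F w0 : Inv F w0 -> Inv (xop i F) (mx w0 i).
Proof.
move=> [R [-> hR]]; exists (xop i R); split.
  by rewrite (@xop_lin K n m i).1 /xop linextU.
by rewrite /ordx /= tsum_incr; apply: xop_low.
Qed.

Lemma dop_inv i F w0 : Inv F w0 -> Inv (dop i F) (md w0 i).
Proof.
move=> [R [-> hR]].
exists ((tnth w0.1.1 i)%:R *: (<< ((tdecr w0.1.1 i, w0.1.2), w0.2) >> : FM) + dop i R); split.
  by rewrite (@dop_lin K n m i).1 {1}/dop linextU addrA.
have -> : ordx (md w0 i).1 = ordx w0.1 by [].
have -> : ordd (md w0 i).1 = (ordd w0.1).+1 by rewrite /ordd /= tsum_incr.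
apply: LowD; last exact: dop_low.
case: (posnP (tnth w0.1.1 i)) => [->|hp]; first by rewrite scale0r; apply: Low0.
apply: LowZ; apply: LowU => /=; last exact: leqnSn.
exact: tsum_decr_lt.
Qed.

Lemma iter_inv (op : 'I_n -> FM -> FM) (f : T -> 'I_n -> T) k i F w0 :
  (forall i F w0, Inv F w0 -> Inv (op i F) (f w0 i)) -> Inv F w0 ->
  Inv (iter k (op i) F) (iter k (fun w => f w i) w0).
Proof. by move=> h h0; elim: k => [|k IH] //=; apply: h. Qed.

Lemma foldr_inv (op : 'I_n -> FM -> FM) (f : T -> 'I_n -> T) (k : 'I_n -> nat) (s : seq 'I_n) F w0 :
  (forall i F w0, Inv F w0 -> Inv (op i F) (f w0 i)) -> Inv F w0 ->
  Inv (foldr (fun i g => iter (k i) (op i) g) F s) (foldr (fun i w => iter (k i) (fun w => f w i) w) w0 s).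
Proof. by move=> h h0; elim: s => [|a s IH] //=; apply: iter_inv. Qed.

Lemma act_mon_U (th : Mon n) (w : T) :
  exists R, act_mon th (<<w>> : FM) = <<mshift th w>> + R /\
            Low R (ordx th + ordx w.1) (ordd th + ordd w.1).
Proof.
have h0 : Inv (<<w>> : FM) w by exists 0; split; [rewrite addr0 | apply: Low0].
have := foldr_inv (fun i => tnth th.1 i) (enum 'I_n) xop_inv
  (foldr_inv (fun i => tnth th.2 i) (enum 'I_n) dop_inv h0).
rewrite foldr_md foldr_mx /= !foldr_incr_enum => -[R [E hR]].
exists R; split; first exact: E.
by rewrite -ordx_mshift -ordd_mshift.
Qed.

End L.


Section B.
Variables (K : fieldType) (n m : nat).
Local Notation T := (Term n m).
Local Notation FM := (FreeMod K n m).

Definition termlt (a b : T) := termle_x a b && (a != b).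

Definition Below (R : FM) (w : T) (D : nat) :=
  forall t, t \in msupp R -> termlt t w /\ (ordd t.1 <= D)%N.

Lemma Below0 w D : Below 0 w D.
Proof. by move=> t; rewrite msupp0'. Qed.

Lemma BelowD (a b : FM) w D : Below a w D -> Below b w D -> Below (a + b) w D.
Proof.
move=> ha hb t /(fsubsetP (msuppD_le a b)); rewrite in_fsetU => /orP[/ha|/hb] //.
Qed.

Lemma BelowZ (c : K) (a : FM) w D : Below a w D -> Below (c *: a) w D.
Proof. by move=> ha t /(fsubsetP (msuppZ_le c a)) /ha. Qed.

Lemma Below_sumZ (s : seq T) (c : T -> K) (F : T -> FM) w D :
  (forall u, u \in s -> Below (F u) w D) -> Below (\sum_(u <- s) c u *: F u) w D.
Proof.
elim: s => [|a s IH] h; first by rewrite big_nil; apply: Below0.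
rewrite big_cons; apply: BelowD; first by apply: BelowZ; apply: h; rewrite inE eqxx.
by apply: IH => u us; apply: h; rewrite inE us orbT.
Qed.

Lemma Low_Below (R : FM) (w : T) D : Low R (ordx w.1) D -> Below R w D.
Proof. by move=> h t /h [h1 h2]; split => //; apply: ordx_lt_termle. Qed.

Lemma mcoeffUZ (c : K) (u k : T) : (c *: (<<u>> : FM))@_k = c * (u == k)%:R.
Proof. by rewrite mcoeffZ mcoeffU1'. Qed.

Lemma act_mon_g (th : Mon n) (g : FM) ug vg : is_xleader g ug -> is_dleader g vg ->
  exists Rest, act_mon th g = g@_ug *: <<mshift th ug>> + Rest /\
               Below Rest (mshift th ug) (ordd th + ordd vg.1).
Proof.
move=> [hu hxu] [hv hdv].
have hvd : forall w, w \in msupp g -> (ordd w.1 <= ordd vg.1)%N.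
  by move=> w /hdv; apply: termle_d_ordd.
have [Ru [ERu hRu]] := act_mon_U K th ug.
set g' := g - g@_ug *: (<<ug>> : FM).
have Eg : g = g@_ug *: <<ug>> + g' by rewrite /g' addrC subrK.
exists (g@_ug *: Ru + act_mon th g'); split.
  rewrite {1}Eg (@act_mon_lin K n m th).1 (@act_mon_lin K n m th).2 ERu scalerDr addrA //.
apply: BelowD.
  apply: BelowZ; apply: Low_Below; rewrite ordx_mshift.
  apply: LowW hRu => //; rewrite leq_add2l; exact: hvd.
rewrite (islin_expand g' (@act_mon_lin K n m th)); apply: Below_sumZ => w hw.
have hw' : w \in msupp g /\ w != ug.
  move: hw; rewrite -mcoeff_neq0 /g' mcoeffB mcoeffUZ.
  case: (eqVneq ug w) => [->|ne]; first by rewrite mulr1 subrr eqxx.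
  by rewrite mulr0 subr0 mcoeff_neq0 => h; split => //; rewrite eq_sym.
case: hw' => hwg hne.
have [Rw [ERw hRw]] := act_mon_U K th w.
rewrite ERw; apply: BelowD.
  move=> t; rewrite msuppU1' in_fset1 => /eqP ->; split.
    rewrite /termlt termle_x_mshift ?hxu //=.
    by apply: contra hne => /eqP /mshift_inj ->.
  by rewrite ordd_mshift leq_add2l; exact: hvd.
apply: Low_Below; rewrite ordx_mshift; apply: LowW hRw.
  by rewrite leq_add2l; apply: termle_x_ordx; apply: hxu.
by rewrite leq_add2l; exact: hvd.
Qed.

End B.


Section W.
Variables (K : fieldType) (n m : nat).
Local Notation T := (Term n m).
Local Notation FM := (FreeMod K n m).
Local Notation WA := (Weyl K n).

Lemma actEw (Q : WA) (f : FM) (d : {fset Mon n}) : (msupp Q `<=` d)%fset ->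
  act Q f = \sum_(th <- d) Q@_th *: act_mon th f.
Proof.
move=> le; rewrite /act (big_fset_incl _ le) //= => x xd /mcoeff_outdom ->.
by rewrite scale0r.
Qed.

Lemma actD (Q1 Q2 : WA) (f : FM) : act (Q1 + Q2) f = act Q1 f + act Q2 f.
Proof.
rewrite (@actEw (Q1 + Q2) f (msupp Q1 `|` msupp Q2)%fset) ?msuppD_le //.
rewrite (@actEw Q1 f (msupp Q1 `|` msupp Q2)%fset) ?fsubsetUl //.
rewrite (@actEw Q2 f (msupp Q1 `|` msupp Q2)%fset) ?fsubsetUr //.
by rewrite -big_split /=; apply: eq_bigr => w _; rewrite mcoeffD scalerDl.
Qed.

Lemma mcoeffW (c : K) (th k : Mon n) : (c *: (<<th>> : WA))@_k = c * (th == k)%:R.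
Proof. by rewrite mcoeffZ; have -> : (<<th>> : WA)@_k = (th == k)%:R by exact: (@mcoeffU _ K th 1 k). Qed.

Lemma act_single (c : K) (th : Mon n) (f : FM) : act (c *: (<<th>> : WA)) f = c *: act_mon th f.
Proof.
have le : (msupp (c *: (<<th>> : WA)) `<=` [fset th])%fset.
  apply: fsubset_trans (msuppZ_le _ _) _; exact: msuppU_le.
by rewrite (actEw f le) big_seq_fset1 mcoeffW eqxx mulr1.
Qed.

End W.

Lemma termle_x_refl n m (a : Term n m) : termle_x a a.
Proof. exact: lexle_refl. Qed.

Lemma termle_x_trans n m (a b c : Term n m) : termle_x a b -> termle_x b c -> termle_x a c.
Proof. exact: lexle_trans. Qed.

Lemma termle_x_total n m (a b : Term n m) : termle_x a b || termle_x b a.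
Proof. exact: lexle_total. Qed.

Lemma max_exists n m (P : Term n m -> Prop) (s : seq (Term n m)) :
  (exists x, x \in s /\ P x) ->
  exists x, [/\ x \in s, P x & forall y, y \in s -> P y -> termle_x y x].
Proof.
elim: s => [|a s IH]; first by case=> x [].
move=> H; case: (classic (exists x, x \in s /\ P x)) => [/IH [x [xs Px hx]]|nos].
  case: (classic (P a)) => Pa.
    case/orP: (termle_x_total a x) => hax.
      exists x; split; first by rewrite inE xs orbT.
        by [].
      move=> y; rewrite inE => /orP[/eqP ->|ys] //; exact: hx.
    exists a; split; first by rewrite inE eqxx.
      by [].
    move=> y; rewrite inE => /orP[/eqP ->|ys Py]; first by rewrite termle_x_refl.
    exact: termle_x_trans (hx _ ys Py) hax.
  exists x; split; first by rewrite inE xs orbT.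
    by [].
  move=> y; rewrite inE => /orP[/eqP -> //|ys]; exact: hx.
have Pa : P a.
  case: H => x []; rewrite inE => /orP[/eqP -> //|xs Px].
  by exfalso; apply: nos; exists x.
exists a; split; first by rewrite inE eqxx.
  by [].
move=> y; rewrite inE => /orP[/eqP ->|ys Py]; first by rewrite termle_x_refl.
by exfalso; apply: nos; exists y.
Qed.


Lemma size_key n m (a : Term n m) : size (key a) = (n + n).+3.
Proof. by rewrite /key size_cat size_keyx addn1. Qed.

Lemma termlt_acc n m : forall a : Term n m, Acc (@termlt n m) a.
Proof.
have H : forall s, Acc (lexR (n + n).+3) s -> forall a : Term n m, key a = s -> Acc (@termlt n m) a.
  move=> s; elim=> s' _ IH a ea; constructor=> b /andP [hb nb]; apply: (IH (key b)) => //.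
  rewrite -ea; split; rewrite ?size_key //.
  by apply: contra nb => /eqP /key_inj ->.
by move=> a; apply: (H _ (lexR_wf _ _) a erefl).
Qed.

Section M.
Variables (K : fieldType) (n m r : nat) (g : 'I_r -> FreeMod K n m) (f : FreeMod K n m).
Local Notation T := (Term n m).
Local Notation FM := (FreeMod K n m).
Local Notation WA := (Weyl K n).

Definition red (h : FM) (w : T) : Prop :=
  w \in msupp h /\ exists i ug vg vh,
    [/\ is_xleader (g i) ug, is_dleader (g i) vg, is_dleader h vh, tdiv ug w
      & (ordd (mquot ug.1 w.1) + ordd vg.1 <= ordd vh.1)%N].

Definition Inv2 (h : FM) := exists Q : 'I_r -> WA, f - h = \sum_(i < r) act (Q i) (g i).

Lemma act0 (h : FM) : act (0 : WA) h = 0.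
Proof.
rewrite /act; have -> : msupp (0 : WA) = fset0 by exact: msupp0.
by rewrite big_seq_fset0.
Qed.

Lemma step h t : Inv2 h -> red h t -> (forall w, red h w -> termle_x w t) ->
  exists h', Inv2 h' /\ forall w, red h' w -> termlt w t.
Proof.
move=> [Q EQ] [ht [i [ug [vg [vh [hxu hdv hvh hdiv hle]]]]]] hmax.
set th := mquot ug.1 t.1.
have eT : mshift th ug = t := mshift_mquot hdiv.
have [Rest [EA hB]] := act_mon_g th hxu hdv.
rewrite eT in EA hB.
have gu0 : (g i)@_ug != 0 by rewrite mcoeff_neq0; case: hxu.
set c := h@_t / (g i)@_ug.
set h' := h - c *: act_mon th (g i).
exists h'; split.
  exists (fun j => if j == i then Q j + c *: (<<th>> : WA) else Q j).
  have -> : f - h' = (f - h) + c *: act_mon th (g i) by rewrite /h' opprB addrA addrAC addrC addrA addrC. 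
  rewrite EQ.
  have E1 : \sum_(j < r) act (Q j) (g j) = act (Q i) (g i) + \sum_(j < r | j != i) act (Q j) (g j).
    exact: (bigD1 i).
  have E2 : \sum_(j < r) act (if j == i then Q j + c *: (<<th>> : WA) else Q j) (g j) =
     act (if i == i then Q i + c *: (<<th>> : WA) else Q i) (g i) + 
     \sum_(j < r | j != i) act (if j == i then Q j + c *: (<<th>> : WA) else Q j) (g j).
    exact: (bigD1 i).
  have E3 : \sum_(j < r | j != i) act (if j == i then Q j + c *: (<<th>> : WA) else Q j) (g j) =
            \sum_(j < r | j != i) act (Q j) (g j).
    by apply: eq_bigr => j /negbTE ->.
  apply/esym; apply: (etrans E2). rewrite eqxx actD act_single.
  apply: (etrans (congr1 (fun z => _ + z) E3)).
  apply/esym; apply: (etrans (congr1 (fun z => z + _) E1)).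
  exact: addrAC.
have Rt0 : Rest@_t = 0.
  by apply: mcoeff_outdom; apply/negP => /hB [/andP [_]]; rewrite eqxx.
have hcoef : forall w, h'@_w = h@_w - c * ((g i)@_ug * (t == w)%:R + Rest@_w).
  by move=> w; rewrite /h' EA mcoeffB mcoeffZ mcoeffD mcoeffUZ.
have h't : h'@_t = 0.
  by rewrite hcoef eqxx mulr1 Rt0 addr0 /c divfK // subrr.
have hsupp : forall w, w \in msupp h' -> (w \in msupp Rest) \/ (w != t /\ w \in msupp h).
  move=> w hw; case: (classic (w \in msupp Rest)) => [|nR]; [by left|right].
  have wt : w != t.
    by apply/eqP => e; move: hw; rewrite e -mcoeff_neq0 h't eqxx.
  split => //; move: hw; rewrite -!mcoeff_neq0 hcoef (eq_sym t) (negbTE wt) mulr0 add0r.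
  have nR' : w \notin msupp Rest by apply/negP.
  by rewrite (mcoeff_outdom nR') mulr0 subr0.
have hD : forall w, w \in msupp h' -> (ordd w.1 <= ordd vh.1)%N.
  move=> w /hsupp [/hB [_ hw]|[_ hw]]; first exact: leq_trans hw hle.
  by apply: termle_d_ordd; apply: hvh.2.
move=> w [hw [i' [ug' [vg' [vh' [h1 h2 h3 h4 h5]]]]]].
case: (hsupp w hw) => [/hB [] //|[wt hwh]].
have : termle_x w t.
  apply: hmax; split => //; exists i', ug', vg', vh; split => //.
  exact: leq_trans h5 (hD _ h3.1).
by rewrite /termlt => ->; rewrite wt.
Qed.

Lemma reduced h : (forall w, ~ red h w) -> xd_reduced_set g h.
Proof.
move=> H i ug vg vf h1 h2 h3 w hw; apply/negP => /andP [hd hl].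
by apply: (H w); split => //; exists i, ug, vg, vf; split.
Qed.

Lemma main_ind t : forall h, Inv2 h -> red h t -> (forall w, red h w -> termle_x w t) ->
  exists h', Inv2 h' /\ xd_reduced_set g h'.
Proof.
elim: (termlt_acc t) => {}t _ IH h hI ht hmax.
have [h' [hI' hlt]] := step hI ht hmax.
case: (classic (exists w, w \in msupp h' /\ red h' w)) => [hex|hno].
  have [w [_ hw hmw]] := max_exists hex.
  apply: (IH w _ h' hI' hw) => //; first exact: hlt.
  by move=> y hy; apply: hmw => //; case: hy.
exists h'; split => //; apply: reduced => w hw; apply: hno; exists w; split => //.
exact: hw.1.
Qed.

End M.


Theorem theorem4p6 (K : fieldType) (hK : [pchar K] =i pred0)
    (n m r : nat) (f : FreeMod K n m) (g : 'I_r -> FreeMod K n m) :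
  is_xd_groebner g ->
  exists (h : FreeMod K n m) (Q : 'I_r -> Weyl K n),
    f - h = \sum_(i < r) act (Q i) (g i) /\ xd_reduced_set g h.
Proof.
move=> _.
have Z : \sum_(i < r) act (0 : Weyl K n) (g i) = 0.
  by apply: big1 => i _; apply: act0.
have Inv0 : Inv2 g f f.
  by exists (fun _ => 0); exact: etrans (subrr f) (esym Z).
case: (classic (exists w, w \in msupp f /\ red g f w)) => [hex|hno].
  have [w [_ hw hmw]] := max_exists hex.
  have [h' [[Q EQ] hred]] := main_ind Inv0 hw (fun y hy => hmw y hy.1 hy).
  by exists h', Q; split.
exists f, (fun _ => 0); split; first exact: etrans (subrr f) (esym Z).
apply: reduced => w hw; apply: hno; exists w; split => //; exact: hw.1.
Qed.
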